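(* Let $\Gamma$ be a finite simple graph. Then $\Gamma$ admits no $k$-extended irregular dominating set for $k=2$ and for $k=3$.
   Context: Let $\Gamma=(V,E)$ be a finite simple undirected graph with graph distance $d$. A vertex $v$ carrying a non-negative integer label $\ell$ is said to dominate (or cover) exactly the vertices $u$ with $d(u,v)=\ell$; in particular a vertex labeled $0$ dominates only itself. For $k\ge 0$, a $k$-extended irregular dominating set is a set $S\subseteq V$ of $k$ vertices together with a labeling $\lambda:S\to\mathbb{Z}_{\ge 0}$ assigning distinct labels to distinct vertices, such that every vertex of $V$ is dominated by at least one vertex of $S$; throughout, it is assumed that some vertex of $S$ has label $0$. The labeling $\lambda$ is called a $k$-extended irregular dominating labeling. *)

(* Defs.v *)
From mathcomp Require Import all_boot.
Set Implicit Arguments. Unset Strict Implicit. Unset Printing Implicit Defensive.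

Definition walk (T : finType) (e : rel T) (u v : T) (n : nat) : Prop :=
  exists p : seq T, [/\ size p = n, path e u p & last u p = v].

(* graph distance d(u,v) equals n (never holds if u, v are in different
   components, i.e. d = infinity) *)
Definition dist_eq (T : finType) (e : rel T) (u v : T) (n : nat) : Prop :=
  walk e u v n /\ forall m, m < n -> ~ walk e u v m.

Definition dominates (T : finType) (e : rel T) (v : T) (l : nat) (u : T) : Prop :=
  dist_eq e v u l.

Definition ext_irr_dom (T : finType) (e : rel T) (k : nat)
    (S : {set T}) (lam : T -> nat) : Prop :=
  [/\ #|S| = k,
      {in S &, injective lam},
      (exists2 x, x \in S & lam x = 0)
    & forall u : T, exists2 v, v \in S & dominates e v (lam v) u].

(* Main.v *)
Require Import Defs.
From mathcomp Require Import all_boot.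

Lemma walk_sym (T : finType) (e : rel T) : symmetric e ->
  forall u v n, walk e u v n -> walk e v u n.
Proof.
move=> se u v n [p [Hs Hp Hl]].
exists (rev (belast u p)); split.
- by rewrite size_rev size_belast.
- rewrite -Hl rev_path (@eq_path _ _ e) // => a b /=; exact: se.
- clear Hp Hs; case/lastP: p Hl => [|q w] /=; first by move=> ->.
  move=> _; by rewrite belast_rcons rev_cons last_rcons.
Qed.

Lemma dist_uniq (T : finType) (e : rel T) u v n m :
  dist_eq e u v n -> dist_eq e u v m -> n = m.
Proof.
move=> [Wn Hn] [Wm Hm].
case: (ltngtP n m) => // H; [by case: (Hm _ H) | by case: (Hn _ H)].
Qed.

Lemma dist_sym (T : finType) (e : rel T) : symmetric e ->
  forall u v n, dist_eq e u v n -> dist_eq e v u n.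
Proof.
move=> se u v n [W H]; split; first exact: walk_sym.
by move=> m lt /(@walk_sym _ _ se) /(H _ lt).
Qed.

Lemma dist0 (T : finType) (e : rel T) u v : dist_eq e u v 0 -> u = v.
Proof. by move=> [[p [Hs _ Hl]] _]; case: p Hs Hl. Qed.

Lemma dist_self (T : finType) (e : rel T) u n : dist_eq e u u n -> n = 0.
Proof.
move=> [_ H]; case: n H => // n H; case: (H 0 erefl).
by exists [::].
Qed.

Theorem proposition2p2 (T : finType) (e : rel T) :
  symmetric e -> irreflexive e ->
  forall k : nat, k = 2 \/ k = 3 ->
  ~ (exists (S : {set T}) (lam : T -> nat), ext_irr_dom e k S lam).
Proof.
move=> se _ k Hk [S [lam [HS Hinj [x xS lx] Hdom]]].
subst k.
have L : forall y, y \in S -> y != x ->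
    exists v, [/\ v \in S, v != x, v != y & dist_eq e v y (lam v)].
  move=> y yS yx; have [v vS Hv] := Hdom y.
  exists v; split => //.
  - apply/eqP => vx; move: Hv; rewrite vx lx => /dist0 xy.
    by rewrite xy eqxx in yx.
  - apply/eqP => vy; move: Hv; rewrite vy => /dist_self ly.
    move/eqP: yx; apply; apply: Hinj => //; by rewrite ly lx.
have [y yS yx] : exists2 y, y \in S & y != x.
  have : 1 < #|S| by case: Hk => ->.
  case/card_gt1P => a [b [aS bS ab]].
  case: (eqVneq a x) => [ax|ax]; last by exists a.
  by exists b => //; rewrite -ax eq_sym.
have [z [zS zx zy Dz]] := L y yS yx.
have three : forall w, w \in S -> w != x -> w != y -> w != z -> False.
  move=> w wS wx wy wz.
  have : 2 < #|[set x; y; z]|.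
    apply/card_gt2P; exists x, y, z; split; first by rewrite !inE !eqxx ?orbT.
    by split; rewrite // eq_sym.
  have sub : [set x; y; z] \subset S :\ w.
    apply/subsetP => t; rewrite !inE -orbA => /or3P [] /eqP ->;
      by rewrite ?xS ?yS ?zS andbT // eq_sym.
  move=> H3; have := leq_trans H3 (subset_leq_card sub).
  have := cardsD1 w S; rewrite wS => HS.
  by case: Hk HS => -> /eqP; rewrite eqSS => /eqP <-.
case: Hk => Hk.
  have : 2 < #|S|.
    apply/card_gt2P; exists x, y, z; split => //.
    by split; rewrite // eq_sym.
  by rewrite Hk.
have [w [wS wx wz Dw]] := L z zS zx.
case: (eqVneq w y) => [wy|wy]; last exact: (three w wS wx wy wz).
subst w.
have lyz := @dist_uniq _ _ _ _ _ _ (@dist_sym _ _ se _ _ _ Dw) Dz.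
by move/eqP: zy; apply; apply: Hinj.
Qed.
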